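(* Let $n\in\mathbb{Z}$, $y_0>0$, and define for $x\in\mathbb{R}$, $y>0$ \[ G(x,y)=\frac{1}{2\pi}\log\frac{x^2+(y+y_0)^2}{x^2+(y-y_0)^2},\qquad p_n(x,y)=\frac{1}{\pi}\,\frac{y}{(x-2\pi n)^2+y^2}. \] Then for all $x\in\mathbb{R}$ and $y>0$, \[ \lim_{y_0\to\infty}\frac{G(x,y)}{p_n(0,y_0)}=2y, \] and if $y_0\ge 2\pi|n|$, then \[ \frac{G(x,y)}{p_n(0,y_0)}\le y\,g(y/y_0),\qquad\text{where } g(t)=t^{-1}\log\bigl(1+4t(t-1)^{-2}\bigr). \]
   Context: $G$ is the Green function of the upper half-plane (for $-\tfrac12\Delta$) with pole at $(0,y_0)$; $p_n$ is the Poisson kernel of the upper half-plane with pole at $2\pi n$. *)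

(* Defs.v *)
From Stdlib Require Import Reals ZArith.
From Coquelicot Require Import Coquelicot.
Open Scope R_scope.

(* Green function of the upper half-plane (for -1/2 Delta) with pole at (0,y0). *)
Definition G (y0 x y : R) : R :=
  / (2 * PI) * ln ((x ^ 2 + (y + y0) ^ 2) / (x ^ 2 + (y - y0) ^ 2)).

Definition p (n : Z) (x y : R) : R :=
  / PI * (y / ((x - 2 * PI * IZR n) ^ 2 + y ^ 2)).

Definition g (t : R) : R := / t * ln (1 + 4 * t / (t - 1) ^ 2).

(* Main.v *)
Require Import Defs.
From Stdlib Require Import Reals ZArith Lra Psatz.
From Coquelicot Require Import Coquelicot.
Open Scope R_scope.

Lemma ln_upper (u : R) : 0 <= u -> ln (1 + u) <= u.
Proof.
  intro Hu. rewrite <- (ln_exp u) at 2. apply ln_le; [lra|apply exp_ineq1_le].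
Qed.

Lemma ln_lower (u : R) : 0 <= u -> u / (1 + u) <= ln (1 + u).
Proof.
  intro Hu.
  assert (H := exp_ineq1_le (- (u / (1 + u)))).
  assert (E : 1 + - (u / (1 + u)) = / (1 + u)) by (field; lra).
  rewrite E in H.
  apply ln_le in H; [|apply Rinv_0_lt_compat; lra].
  rewrite ln_exp, ln_Rinv in H by lra. lra.
Qed.

Lemma key (n : Z) (x y y0 : R) : 0 < y -> 0 < y0 -> y <> y0 ->
  G y0 x y / p n 0 y0 = ((2 * PI * IZR n) ^ 2 + y0 ^ 2) / (2 * y0) *
     ln (1 + 4 * y * y0 / (x ^ 2 + (y - y0) ^ 2)).
Proof.
  intros Hy Hy0 Hne.
  set (a := 2 * PI * IZR n). set (D := x ^ 2 + (y - y0) ^ 2).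
  assert (HD : 0 < D).
  { unfold D. assert (0 < (y - y0) ^ 2).
    { replace ((y - y0) ^ 2) with (Rsqr (y - y0)) by (unfold Rsqr; ring).
      apply Rsqr_pos_lt; lra. } nra. }
  assert (HP := PI_RGT_0).
  assert (E : (x ^ 2 + (y + y0) ^ 2) / (x ^ 2 + (y - y0) ^ 2) = 1 + 4 * y * y0 / D).
  { unfold D in *. field. lra. }
  unfold G, p. rewrite E. fold a.
  replace ((0 - a) ^ 2) with (a ^ 2) by ring.
  assert (0 < a ^ 2 + y0 ^ 2) by nra.
  field. repeat split; lra.
Qed.

Lemma lim_inv_t (h : R -> R) : continuous h 0 ->
  is_lim (fun y0 => h (/ y0)) p_infty (h 0).
Proof.
  intro Hc. apply (is_lim_comp_continuous (fun y0 => / y0) h p_infty 0); auto.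
  assert (H := is_lim_inv (fun y => y) p_infty p_infty (is_lim_id p_infty)).
  simpl in H. apply H. discriminate.
Qed.

Theorem lemma3p3 (n : Z) :
  (forall x y : R, 0 < y ->
     is_lim (fun y0 => G y0 x y / p n 0 y0) p_infty (2 * y)) /\
  (forall x y y0 : R, 0 < y -> 0 < y0 -> y <> y0 ->
     2 * PI * IZR (Z.abs n) <= y0 ->
     G y0 x y / p n 0 y0 <= y * g (y / y0)).
Proof.
  assert (HP := PI_RGT_0).
  split.
  - intros x y Hy.
    set (a := 2 * PI * IZR n).
    set (h2 := fun t => 2 * y * (a ^ 2 * t ^ 2 + 1) / (x ^ 2 * t ^ 2 + (y * t - 1) ^ 2)).
    set (h1 := fun t => h2 t / (1 + 4 * y * t / (x ^ 2 * t ^ 2 + (y * t - 1) ^ 2))).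
    apply (is_lim_le_le_loc (fun y0 => h1 (/ y0)) (fun y0 => h2 (/ y0))).
    + exists y. intros y0 Hy0.
      assert (Hy0p : 0 < y0) by lra.
      rewrite key by lra.
      set (D := x ^ 2 + (y - y0) ^ 2).
      assert (HD : 0 < D).
      { unfold D. assert (0 < (y - y0) ^ 2).
        { replace ((y - y0) ^ 2) with (Rsqr (y - y0)) by (unfold Rsqr; ring).
          apply Rsqr_pos_lt; lra. } nra. }
      set (K := (a ^ 2 + y0 ^ 2) / (2 * y0)).
      set (u := 4 * y * y0 / D).
      assert (HK : 0 <= K).
      { unfold K. apply Rmult_le_pos; [nra|]. apply Rlt_le, Rinv_0_lt_compat; lra. }
      assert (Hu : 0 <= u).
      { unfold u. apply Rmult_le_pos; [nra|]. apply Rlt_le, Rinv_0_lt_compat; lra. }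
      assert (E2 : h2 (/ y0) = K * u).
      { unfold h2, K, u. unfold D in *. field. split; [lra|]. repeat apply conj; nra. }
      assert (E1 : h1 (/ y0) = K * (u / (1 + u))).
      { unfold h1. rewrite E2. unfold u. unfold D in *. field. repeat apply conj; nra. }
      rewrite E1, E2. split.
      * apply Rmult_le_compat_l; auto. apply ln_lower; auto.
      * apply Rmult_le_compat_l; auto. apply ln_upper; auto.
    + replace (Finite (2 * y)) with (Finite (h1 0)).
      2:{ unfold h1, h2. f_equal. field. }
      apply lim_inv_t. apply (@ex_derive_continuous R_AbsRing R_NormedModule). unfold h1, h2. auto_derive.
      repeat apply conj; try exact I; intro Hc; ring_simplify in Hc; lra.
    + replace (Finite (2 * y)) with (Finite (h2 0)).
      2:{ unfold h2. f_equal. field. }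
      apply lim_inv_t. apply (@ex_derive_continuous R_AbsRing R_NormedModule). unfold h2. auto_derive.
      repeat apply conj; try exact I; intro Hc; ring_simplify in Hc; lra.
  - intros x y y0 Hy Hy0 Hne Hn.
    rewrite key by assumption.
    set (a := 2 * PI * IZR n).
    assert (Hne' : y - y0 <> 0) by lra.
    assert (Hs : 0 < (y - y0) ^ 2).
    { replace ((y - y0) ^ 2) with (Rsqr (y - y0)) by (unfold Rsqr; ring).
      apply Rsqr_pos_lt; lra. }
    set (D := x ^ 2 + (y - y0) ^ 2).
    assert (HD : (y - y0) ^ 2 <= D) by (unfold D; nra).
    set (K := (a ^ 2 + y0 ^ 2) / (2 * y0)).
    set (u := 4 * y * y0 / D).
    set (w := 4 * y * y0 / (y - y0) ^ 2).
    assert (Hu : 0 <= u).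
    { unfold u. apply Rmult_le_pos; [nra|]. apply Rlt_le, Rinv_0_lt_compat; lra. }
    assert (Huw : u <= w).
    { unfold u, w, Rdiv. apply Rmult_le_compat_l; [nra|].
      apply Rinv_le_contravar; lra. }
    assert (Ha : Rabs a <= y0).
    { unfold a. rewrite !Rabs_mult, (Rabs_right PI) by lra.
      rewrite <- !abs_IZR. change (IZR (Z.abs 2)) with 2. lra. }
    assert (Ha2 : a ^ 2 <= y0 ^ 2).
    { rewrite <- (pow2_abs a). assert (0 <= Rabs a) by apply Rabs_pos. nra. }
    assert (HK0 : 0 <= K).
    { unfold K. apply Rmult_le_pos; [nra|]. apply Rlt_le, Rinv_0_lt_compat; lra. }
    assert (HK : K <= y0).
    { unfold K. apply (Rmult_le_reg_r (2 * y0)); [lra|].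
      unfold Rdiv. rewrite Rmult_assoc, Rinv_l by lra. nra. }
    assert (Hg : y * g (y / y0) = y0 * ln (1 + w)).
    { unfold g, w.
      replace (4 * (y / y0) / (y / y0 - 1) ^ 2) with (4 * y * y0 / (y - y0) ^ 2).
      - field. lra.
      - field. split; lra. }
    rewrite Hg.
    assert (Hl0 : 0 <= ln (1 + u)).
    { rewrite <- ln_1. apply ln_le; lra. }
    apply Rmult_le_compat; auto. apply ln_le; lra.
Qed.
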